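(* Every positive divisor of an odd Gaussian Carmichael number is $G$-cyclic.
   Context: For a positive integer $n$, $\mathcal{G}_n=\{a+bi\in\mathbb{Z}[i]/n\mathbb{Z}[i] : a^2+b^2\equiv 1\pmod n\}$ and $\Phi(n)=|\mathcal{G}_n|$. An integer $n\ge1$ is $G$-cyclic if $\gcd(\Phi(n),n)=1$. The function $\mathcal{F}$ is defined by $\mathcal{F}(n)=n-1$ if $n\equiv 1\pmod 4$, $\mathcal{F}(n)=n+1$ if $n\equiv 3 \pmod 4$, $\mathcal{F}(n)=n$ otherwise. A composite integer $n$ is a Gaussian Fermat pseudoprime to base $z\in\mathbb{Z}[i]$ if $\gcd(n,z\overline{z})=1$ and $(z/\overline{z})^{\mathcal{F}(n)}\equiv 1\pmod n$ in $\mathbb{Z}[i]/n\mathbb{Z}[i]$. A composite $n$ is a Gaussian Carmichael number if it is a Gaussian Fermat pseudoprime to base $z$ for every $z\in\mathbb{Z}[i]$ with $\gcd(n,z\overline{z})=1$. *)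

(* Defs.v *)
(* Gaussian integers are modelled as pairs (a, b) : int * int
   standing for a + b i; congruence mod n in Z[i] is componentwise congruence. *)
From mathcomp Require Import all_boot all_order all_algebra.
Set Implicit Arguments. Unset Strict Implicit. Unset Printing Implicit Defensive.
Import Order.TTheory GRing.Theory Num.Theory.
Local Open Scope ring_scope.

Definition gauss := (int * int)%type.
Definition gone : gauss := (1, 0).
Definition gmul (z w : gauss) : gauss :=
  (z.1 * w.1 - z.2 * w.2, z.1 * w.2 + z.2 * w.1).
Definition gconj (z : gauss) : gauss := (z.1, - z.2).
Definition gnorm (z : gauss) : int := z.1 ^+ 2 + z.2 ^+ 2.
Definition gexp (z : gauss) (k : nat) : gauss := iter k (gmul z) gone.
Definition geqmod (n : nat) (z w : gauss) : bool :=
  ((z.1 == w.1 %[mod n])%Z && (z.2 == w.2 %[mod n])%Z).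

Definition Phi (n : nat) : nat :=
  #|[set p : 'I_n * 'I_n | ((p.1 ^ 2 + p.2 ^ 2) %% n == 1 %% n)%N]|.

Definition G_cyclic (n : nat) : bool := coprime (Phi n) n.

Definition Fm (n : nat) : nat :=
  if (n %% 4 == 1)%N then n.-1 else if (n %% 4 == 3)%N then n.+1 else n.

Definition composite (n : nat) : bool := (1 < n)%N && ~~ prime n.

(* n is a Gaussian Fermat pseudoprime to base z: n composite, gcd(n, z zbar)=1,
   and (z / zbar)^F(n) = 1 in Z[i]/nZ[i]; here z / zbar = z * w where w is the
   (unique) inverse of zbar modulo n. *)
Definition gauss_fermat_psp (n : nat) (z : gauss) : Prop :=
  composite n /\ coprimez (n%:Z) (gnorm z) /\
  forall w : gauss, geqmod n (gmul w (gconj z)) gone ->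
    geqmod n (gexp (gmul z w) (Fm n)) gone.

Definition gauss_carmichael (n : nat) : Prop :=
  composite n /\
  forall z : gauss, coprimez (n%:Z) (gnorm z) -> gauss_fermat_psp n z.

(* Main.v *)
Require Import Defs.
From HB Require Import structures.
From mathcomp Require Import all_boot all_order all_algebra all_fingroup all_solvable.
From mathcomp Require Import ring.
Set Implicit Arguments. Unset Strict Implicit. Unset Printing Implicit Defensive.
Import Order.TTheory GRing.Theory Num.Theory.
Local Open Scope ring_scope.

Section G.
Variable m : nat.
Local Notation R := 'Z_(m.+2).
Definition gm (u v : R*R) : R*R := (u.1*v.1 - u.2*v.2, u.1*v.2 + u.2*v.1).
Definition nrm (u : R*R) : R := u.1*u.1 + u.2*u.2.
Record Tg := MkT { tval :> R*R; _ : nrm tval == 1 }.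
HB.instance Definition _ := [isSub for tval].
HB.instance Definition _ := [Finite of Tg by <:].

Lemma nrm_gm u v : nrm (gm u v) = nrm u * nrm v.
Proof. rewrite /nrm /gm /=; ring. Qed.

Lemma mulT_subproof (x y : Tg) : nrm (gm (val x) (val y)) == 1.
Proof. by rewrite nrm_gm (eqP (valP x)) (eqP (valP y)) mulr1. Qed.
Definition mulT (x y : Tg) : Tg := MkT (mulT_subproof x y).
Lemma oneT_subproof : nrm (1, 0) == 1.
Proof. by rewrite /nrm /= mulr1 mulr0 addr0. Qed.
Definition oneT : Tg := MkT oneT_subproof.
Lemma invT_subproof (x : Tg) : nrm ((val x).1, - (val x).2) == 1.
Proof. by rewrite /nrm /= mulrNN; exact: (valP x). Qed.
Definition invT (x : Tg) : Tg := MkT (invT_subproof x).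

Lemma mulTA : associative mulT.
Proof. move=> x y z; apply: val_inj; rewrite /= /gm /=; congr (_, _); ring. Qed.
Lemma mul1T : left_id oneT mulT.
Proof. move=> [[a b] Hx]; apply: val_inj; rewrite /= /gm /=; congr (_,_); ring. Qed.
Lemma mulVT : left_inverse oneT invT mulT.
Proof.
move=> [[a b] H]; apply: val_inj; rewrite /= /gm /=; move/eqP: H => H.
rewrite /nrm /= in H.
congr (_,_); last ring.
by rewrite -H; ring.
Qed.
HB.instance Definition _ := Finite_isGroup.Build Tg mulTA mul1T mulVT.

Lemma val_expT (x : Tg) k : val (x ^+ k)%g = iter k (gm (val x)) (1, 0).
Proof. elim: k => [|k IH] //; by rewrite expgS /= -IH. Qed.

Lemma cardT : #|[set: Tg]| = #|[set p : 'I_(m.+2) * 'I_(m.+2) | ((p.1 ^ 2 + p.2 ^ 2) %% m.+2 == 1 %% m.+2)%N]|.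
Proof.
rewrite cardsT card_sub cardsE; apply: eq_card => p; rewrite !inE /nrm.
have -> : (p.1 * p.1 + p.2 * p.2 : R) = ((p.1 ^ 2 + p.2 ^ 2)%N)%:R.
  by rewrite natrD !natrX !natr_Zp !expr2.
rewrite -val_eqE /= val_Zp_nat // modn_small //.
Qed.
End G.

Section Phi.
Variable m : nat.
Local Notation R := 'Z_(m.+2).
Definition phi (u : gauss) : R * R := (u.1%:~R, u.2%:~R).
Lemma phi_mul u v : phi (gmul u v) = gm (phi u) (phi v).
Proof. by rewrite /phi /gm /= !(intrD, intrN, intrM). Qed.
Lemma phi_exp u k : phi (gexp u k) = iter k (gm (phi u)) (1, 0).
Proof. elim: k => [|k IH] //=; by rewrite -IH -phi_mul. Qed.
Lemma Zd0 : ((m.+2)%:R : R) = 0.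
Proof. rewrite Zp_nat; apply: val_inj => /=. change (Zp_trunc m.+2).+2 with m.+2; exact: modnn. Qed.
Lemma phi_eqz n (a b : int) : (m.+2 %| n)%N -> (a == b %[mod n])%Z -> (a%:~R : R) = b%:~R.
Proof.
move=> dn; rewrite eqz_mod_dvd => H.
have : ((m.+2)%:Z %| a - b)%Z by apply: dvdz_trans H; rewrite dvdzE.
case/dvdzP => q hq.
apply/eqP; rewrite -subr_eq0 -intrB hq intrM -pmulrn Zd0 mulr0 //.
Qed.
Lemma phi_geq n u v : (m.+2 %| n)%N -> geqmod n u v -> phi u = phi v.
Proof. by move=> dn /andP[h1 h2]; rewrite /phi (phi_eqz dn h1) (phi_eqz dn h2). Qed.
End Phi.

Lemma normZ m (x : Tg m) :
  ((((tval x).1 : nat) * ((tval x).1 : nat) + ((tval x).2 : nat) * ((tval x).2 : nat)) %% m.+2 = 1)%N.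
Proof.
case: x => [[u v] /= /eqP H].
have : (((u : nat) * u + (v : nat) * v)%N%:R : 'Z_(m.+2)) = 1.
  by rewrite natrD !natrM !natr_Zp.
by move/(congr1 (@nat_of_ord _)); rewrite val_Zp_nat // => ->.
Qed.

Lemma inv_uniq (R : comNzRingType) (p q a b : R) : a*a + b*b = 1 ->
  p*a - q*(-b) = 1 -> p*(-b) + q*a = 0 -> p = a /\ q = b.
Proof.
move=> H h1 h2; split.
  rewrite -[p]mulr1 -H.
  transitivity (a * (p * a - q * - b) - b * (p * - b + q * a)); first ring.
  by rewrite h1 h2; ring.
rewrite -[q]mulr1 -H.
transitivity (b * (p * a - q * - b) + a * (p * - b + q * a)); first ring.
by rewrite h1 h2; ring.
Qed.

Lemma key m n (x : Tg m) : (m.+2 %| n)%N -> gauss_carmichael n ->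
  ((x ^+ 2) ^+ Fm n = 1)%g.
Proof.
move=> dn [/andP[n1 _] carm].
have n0 : (0 < n)%N by apply: ltnW.
set d := m.+2.
set a : nat := (tval x).1. set b : nat := (tval x).2.
have hab : ((a * a + b * b) %% d = 1)%N := normZ x.
pose pi := \pi(d). pose e := partn n pi^'.
have cde : coprime d e := pnat_coprime (pnat_pi (ltn0Sn _)) (part_pnat _ _).
pose A := chinese d e a 1. pose B := chinese d e b 0.
have hAd : A = a %[mod d] := chinese_modl cde a 1.
have hAe : A = 1 %[mod e] := chinese_modr cde a 1.
have hBd : B = b %[mod d] := chinese_modl cde b 0.
have hBe : B = 0 %[mod e] := chinese_modr cde b 0.
pose N := (A * A + B * B)%N.
have hNd : N = 1 %[mod d].
  rewrite /N -modnDm -modnMm hAd modnMm -(modnMm B) hBd modnMm modnDm hab.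
  by rewrite modn_small.
have hNe : N = 1 %[mod e].
  by rewrite /N -modnDm -modnMm hAe modnMm -(modnMm B) hBe modnMm modnDm.
have cNd : coprime N d by rewrite -coprime_modl hNd coprime_modl coprime1n.
have cNe : coprime N e by rewrite -coprime_modl hNe coprime_modl coprime1n.
have N0 : (0 < N)%N.
  rewrite lt0n; apply: contraTneq cNd => ->; by rewrite /coprime gcd0n.
have cNn : coprime N n.
  rewrite -(partnC pi n0) coprimeMr cNe andbT.
  apply: (@sub_pnat_coprime \pi(N) pi) (pnat_pi N0) (part_pnat _ _).
  have H : \pi(N)^'.-nat d by rewrite -coprime_pi'.
  by move=> p pd; apply: pnatPpi H pd.
pose z : gauss := (A%:Z, B%:Z).
have gz : Defs.gnorm z = N%:Z by rewrite /Defs.gnorm /= !expr2.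
have cz : coprimez n%:Z (Defs.gnorm z) by rewrite gz coprimezE /= coprime_sym.
have [u [v huv]] := Bezoutz N%:Z n%:Z.
have g1 : gcdz N%:Z n%:Z = 1 by rewrite /gcdz /= (eqP cNn).
rewrite g1 in huv.
pose w : gauss := (u * A%:Z, u * B%:Z).
have [_ [_ Hw]] := carm z cz.
have Hwz : geqmod n (gmul w (gconj z)) gone.
  apply/andP; split; rewrite /gmul /w /z /gone /=.
    rewrite eqz_mod_dvd; apply/dvdzP; exists (- v).
    have -> : u * A%:Z * A%:Z - u * B%:Z * - B%:Z - 1 = u * N%:Z - 1.
      by rewrite /N PoszD !PoszM; ring.
    by rewrite -huv; ring.
  by have -> : u * A%:Z * - B%:Z + u * B%:Z * A%:Z = 0 by ring.
have := Hw w Hwz.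
move/(phi_geq dn); rewrite phi_exp phi_mul.
have natE (k : nat) (y : 'Z_(m.+2)) : k = y %[mod d] -> (k%:R : 'Z_(m.+2)) = y.
  by move=> h; apply: val_inj; rewrite /= val_Zp_nat // h modn_small.
have phz : phi m z = tval x.
  have e1 : (A%:R : 'Z_(m.+2)) = (tval x).1 := natE _ _ hAd.
  have e2 : (B%:R : 'Z_(m.+2)) = (tval x).2 := natE _ _ hBd.
  rewrite /phi /= -!pmulrn e1 e2; exact: (esym (surjective_pairing _)).
have phw : phi m w = tval x.
  have := phi_geq dn Hwz; rewrite phi_mul.
  have -> : phi m (gconj z) = ((tval x).1, - (tval x).2) by rewrite -phz /phi /= intrN.
  have Hx : nrm (tval x) = 1 := eqP (valP x).
  move: (phi m w) (tval x) Hx => [p q] [a' b'] H Hc.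
  by case: (inv_uniq H (congr1 fst Hc) (congr1 snd Hc)) => /= -> ->.
rewrite phz phw /phi /= => H; apply: val_inj; rewrite val_expT val_expT.
have gm1 : forall u : 'Z_(m.+2) * 'Z_(m.+2), gm u (1, 0) = u.
  by move=> [u1 u2]; rewrite /gm /=; congr (_, _); ring.
rewrite /= gm1; exact: H.
Qed.

Theorem mainTheorem12 (n d : nat) :
  odd n -> gauss_carmichael n -> (0 < d)%N -> (d %| n)%N -> G_cyclic d.
Proof.
move=> odn carm.
case: d => [|[|m]] // _ dn; first by rewrite /G_cyclic coprimen1.
rewrite /G_cyclic /Phi -cardT.
apply/negPn/negP => ncop.
rewrite /coprime in ncop; set g0 := gcdn _ _ in ncop.
have g01 : (1 < g0)%N.
  rewrite ltn_neqAle eq_sym ncop /= lt0n; apply/negP => /eqP g00.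
  by move: (dvdn_gcdr #|[set: Tg m]| m.+2); rewrite -/g0 g00 dvd0n.
set p := pdiv g0.
have pp : prime p := pdiv_prime g01.
have pT : (p %| #|[set: Tg m]|)%N := dvdn_trans (pdiv_dvd _) (dvdn_gcdl _ _).
have pd : (p %| m.+2)%N := dvdn_trans (pdiv_dvd _) (dvdn_gcdr _ _).
have pn : (p %| n)%N := dvdn_trans pd dn.
have [x _ ox] := Cauchy pp pT.
have := key x dn carm; rewrite -expgM => /eqP; rewrite -order_dvdn ox.
have p2 : coprime p 2.
  rewrite coprime_sym prime_coprime //; apply: contraL odn => h.
  by rewrite -dvdn2; exact: dvdn_trans h pn.
rewrite Gauss_dvdr //.
have n0 : (0 < n)%N by apply: odd_gt0.
have p1 : ~~ (p %| 1)%N by rewrite dvdn1; apply/negP => /eqP p1; rewrite p1 in pp.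
have n4 : odd (n %% 4)%N.
  by move: odn; rewrite {1}(divn_eq n 4) oddD oddM andbF.
rewrite /Fm; case: ifP => [_ h|h1].
  by move: p1; rewrite -(dvdn_addr 1 h) addn1 prednK // pn.
case: ifP => [_ h|h3 h]; first by move: p1; rewrite -(dvdn_addr 1 pn) addn1 h.
have := @ltn_pmod n 4 isT.
move: h1 h3 n4 => {h}.
by case: (n %% 4)%N => [|[|[|[|k]]]].
Qed.
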